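(* Regard spinors as vectors in the 4-dimensional Euclidean space $(\mathrm{Cl}^+(3),(\cdot,\cdot))$ and let $I=e_1e_2e_3$. Then: (i) $\{a_1a_1=1,\ a_1a_2,\ a_1I,\ a_2I\}$ is a set of simple roots of a root system of type $A_2\oplus A_2$ contained in the $H_4$ root system $2I$; (ii) $\{a_1a_1=1,\ a_2a_3,\ a_2I,\ a_3I\}$ is a set of simple roots of a root system of type $H_2\oplus H_2$ contained in $2I$; (iii) $\{a_1a_1,\ a_1a_2,\ a_1a_3a_2a_1a_3a_2a_1a_3,\ a_3a_2a_1a_3a_2a_1a_3a_2a_3a_1a_2a_3\}$ is a set of simple roots of a root system of type $A_4$ contained in $2I$. (A set of simple roots of a given type means its Cartan matrix $A_{ij}=2(\beta_i,\beta_j)/(\beta_i,\beta_i)$ is that of the given type and the root system generated from it by the reflections $s_R(X)=-R\tilde XR$ lies in $2I$.)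
   Context: $\mathrm{Cl}(3)$ is the real Clifford algebra of Euclidean $\mathbb{R}^3$ with orthonormal basis $e_1,e_2,e_3$ ($e_i^2=1$, $e_ie_j=-e_je_i$ for $i\neq j$); all products are geometric products. The even subalgebra $\mathrm{Cl}^+(3)$ is spanned by $1,e_2e_3,e_3e_1,e_1e_2$ (spinors). Reversal $\tilde{\ }$ reverses the order of vector factors. The spinor inner product $(R_1,R_2)=\tfrac12(R_1\tilde R_2+R_2\tilde R_1)$ makes $\mathrm{Cl}^+(3)$ a 4D Euclidean space with orthonormal basis $1,e_2e_3,e_3e_1,e_1e_2$; for unit $R$, $s_R(X)=X-2(R,X)R=-R\tilde XR$. Let $\tau=\frac{1+\sqrt5}{2}$. The $H_3$ simple roots are $a_1=e_2$, $a_2=\tfrac12(-\tau e_1-e_2-(\tau-1)e_3)$, $a_3=e_1$. The binary icosahedral group $2I$ is the set of all products of an even number of factors from $\{a_1,a_2,a_3\}$ (order 120); as 120 vectors in the 4D spinor space it is the $H_4$ root system. Cartan matrices: $A_2\oplus A_2$ is block diagonal with two blocks $\begin{pmatrix}2&-1\\-1&2\end{pmatrix}$; $H_2\oplus H_2$ is block diagonal with two blocks $\begin{pmatrix}2&-\tau\\-\tau&2\end{pmatrix}$; $A_4$ is the $4\times4$ tridiagonal matrix with $2$ on the diagonal and $-1$ on the off-diagonals (up to ordering of simple roots). *)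

(* Defs.v *)
From HB Require Import structures.
From mathcomp Require Import all_boot all_order all_algebra all_fingroup.
Set Implicit Arguments. Unset Strict Implicit. Unset Printing Implicit Defensive.
Import Order.TTheory GRing.Theory Num.Theory.
Local Open Scope ring_scope.

(* The real Clifford algebra Cl(3) of Euclidean R^3 with coefficients in a
   ring R (we use a real closed field R, e.g. the reals). *)
Record cl (R : Type) := Cl {
  cs : R; c1 : R; c2 : R; c3 : R; c23 : R; c31 : R; c12 : R; c123 : R }.

Section Clifford.
Variable R : comNzRingType.

Definition cl_one : cl R := Cl 1 0 0 0 0 0 0 0.
Definition cl_e1 : cl R := Cl 0 1 0 0 0 0 0 0.
Definition cl_e2 : cl R := Cl 0 0 1 0 0 0 0 0.
Definition cl_e3 : cl R := Cl 0 0 0 1 0 0 0 0.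
Definition cl_I : cl R := Cl 0 0 0 0 0 0 0 1.

Definition cl_vec (x1 x2 x3 : R) : cl R := Cl 0 x1 x2 x3 0 0 0 0.

Definition cl_opp (x : cl R) : cl R :=
  Cl (- cs x) (- c1 x) (- c2 x) (- c3 x) (- c23 x) (- c31 x) (- c12 x) (- c123 x).

(* Geometric product, from e_i^2 = 1 and e_i e_j = - e_j e_i (i <> j). *)
Definition cl_mul (x y : cl R) : cl R := Cl
  (cs x * cs y + c1 x * c1 y + c2 x * c2 y + c3 x * c3 y
   - c23 x * c23 y - c31 x * c31 y - c12 x * c12 y - c123 x * c123 y)
  (cs x * c1 y + c1 x * cs y - c2 x * c12 y + c3 x * c31 y
   - c23 x * c123 y - c31 x * c3 y + c12 x * c2 y - c123 x * c23 y)
  (cs x * c2 y + c1 x * c12 y + c2 x * cs y - c3 x * c23 y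
   + c23 x * c3 y - c31 x * c123 y - c12 x * c1 y - c123 x * c31 y)
  (cs x * c3 y - c1 x * c31 y + c2 x * c23 y + c3 x * cs y
   - c23 x * c2 y + c31 x * c1 y - c12 x * c123 y - c123 x * c12 y)
  (cs x * c23 y + c1 x * c123 y + c2 x * c3 y - c3 x * c2 y
   + c23 x * cs y - c31 x * c12 y + c12 x * c31 y + c123 x * c1 y)
  (cs x * c31 y - c1 x * c3 y + c2 x * c123 y + c3 x * c1 y
   + c23 x * c12 y + c31 x * cs y - c12 x * c23 y + c123 x * c2 y)
  (cs x * c12 y + c1 x * c2 y - c2 x * c1 y + c3 x * c123 y
   - c23 x * c31 y + c31 x * c23 y + c12 x * cs y + c123 x * c3 y)
  (cs x * c123 y + c1 x * c23 y + c2 x * c31 y + c3 x * c12 y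
   + c23 x * c1 y + c31 x * c2 y + c12 x * c3 y + c123 x * cs y).

(* Reversal: reverses the order of vector factors; it fixes grades 0,1
   and negates grades 2,3. *)
Definition cl_rev (x : cl R) : cl R :=
  Cl (cs x) (c1 x) (c2 x) (c3 x) (- c23 x) (- c31 x) (- c12 x) (- c123 x).

End Clifford.

Notation "x *c y" := (cl_mul x y) (at level 40, left associativity).

Section Spinors.
Variable R : rcfType.

Definition tau : R := (1 + Num.sqrt 5) / 2.

(* H3 simple roots. *)
Definition a1 : cl R := cl_vec 0 1 0.
Definition a2 : cl R := cl_vec (- tau / 2) (- 1 / 2) (- (tau - 1) / 2).
Definition a3 : cl R := cl_vec 1 0 0.
Definition aH3 (i : 'I_3) : cl R := tnth [tuple a1; a2; a3] i.

(* The binary icosahedral group 2I: all products of an even number of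
   factors from {a1, a2, a3} (the empty product being 1). *)
Inductive in2I : cl R -> Prop :=
  | in2I_one : in2I (cl_one R)
  | in2I_step (i j : 'I_3) (x : cl R) : in2I x -> in2I (aH3 i *c aH3 j *c x).

(* Spinor inner product (R1,R2) = 1/2 (R1 ~R2 + R2 ~R1), a scalar: we take
   the scalar (grade 0) coefficient. *)
Definition spinor_ip (x y : cl R) : R :=
  cs (x *c cl_rev y) / 2 + cs (y *c cl_rev x) / 2.

Definition srefl (r x : cl R) : cl R := cl_opp (r *c cl_rev x *c r).

Definition cartan (b : 'I_4 -> cl R) : 'M[R]_4 :=
  \matrix_(i < 4, j < 4) (2 * spinor_ip (b i) (b j) / spinor_ip (b i) (b i)).

Inductive gen_roots (b : 'I_4 -> cl R) : cl R -> Prop :=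
  | gen_base (i : 'I_4) : gen_roots b (b i)
  | gen_refl (i : 'I_4) (x : cl R) : gen_roots b x -> gen_roots b (srefl (b i) x).

(* b is a set of simple roots of type with Cartan matrix C (up to ordering
   of the simple roots), generating a root system contained in 2I. *)
Definition simple_system_in_2I (b : 'I_4 -> cl R) (C : 'M[R]_4) : Prop :=
  (exists s : 'S_4, cartan (fun i => b (s i)) = C) /\
  (forall x, gen_roots b x -> in2I x).

Definition four (x0 x1 x2 x3 : cl R) (i : 'I_4) : cl R :=
  tnth [tuple x0; x1; x2; x3] i.

Definition cartan_A2A2 : 'M[R]_4 := \matrix_(i < 4, j < 4)
  (if i == j then 2
   else if [|| (i == 0 :> nat) && (j == 1 :> nat), (i == 1 :> nat) && (j == 0 :> nat),
               (i == 2 :> nat) && (j == 3 :> nat) | (i == 3 :> nat) && (j == 2 :> nat)]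
        then -1 else 0).

Definition cartan_H2H2 : 'M[R]_4 := \matrix_(i < 4, j < 4)
  (if i == j then 2
   else if [|| (i == 0 :> nat) && (j == 1 :> nat), (i == 1 :> nat) && (j == 0 :> nat),
               (i == 2 :> nat) && (j == 3 :> nat) | (i == 3 :> nat) && (j == 2 :> nat)]
        then - tau else 0).

Definition cartan_A4 : 'M[R]_4 := \matrix_(i < 4, j < 4)
  (if i == j then 2
   else if (i.+1 == j :> nat) || (j.+1 == i :> nat) then -1 else 0).

End Spinors.

(* Main.v *)
Require Import Defs.
From mathcomp Require Import all_boot all_order all_algebra all_fingroup.
From mathcomp Require Import ring.
Set Implicit Arguments. Unset Strict Implicit. Unset Printing Implicit Defensive.
Import Order.TTheory GRing.Theory Num.Theory.
Local Open Scope ring_scope.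

Definition qt := (rat * rat)%type.
Definition qadd (x y : qt) : qt := (x.1 + y.1, x.2 + y.2).
Definition qopp (x : qt) : qt := (- x.1, - x.2).
Definition qsub (x y : qt) : qt := qadd x (qopp y).
Definition qmul (x y : qt) : qt :=
  (x.1 * y.1 + x.2 * y.2, x.1 * y.2 + x.2 * y.1 + x.2 * y.2).
Definition qc (a b : rat) : qt := (a, b).
Definition q0 : qt := (0, 0).
Definition q1 : qt := (1, 0).
Definition q2 : qt := (2, 0).
Definition qm1 : qt := (-1, 0).
Definition qmt : qt := (0, -1).
Definition qhalf : qt := (2^-1, 0).
Definition qcl := cl qt.
Definition qcl_mul (x y : qcl) : qcl := Cl
  (qsub (qsub (qsub (qsub (qadd (qadd (qadd (qmul (cs x) (cs y)) (qmul (c1 x) (c1 y))) (qmul (c2 x) (c2 y))) (qmul (c3 x) (c3 y))) (qmul (c23 x) (c23 y))) (qmul (c31 x) (c31 y))) (qmul (c12 x) (c12 y))) (qmul (c123 x) (c123 y)))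
  (qsub (qadd (qsub (qsub (qadd (qsub (qadd (qmul (cs x) (c1 y)) (qmul (c1 x) (cs y))) (qmul (c2 x) (c12 y))) (qmul (c3 x) (c31 y))) (qmul (c23 x) (c123 y))) (qmul (c31 x) (c3 y))) (qmul (c12 x) (c2 y))) (qmul (c123 x) (c23 y)))
  (qsub (qsub (qsub (qadd (qsub (qadd (qadd (qmul (cs x) (c2 y)) (qmul (c1 x) (c12 y))) (qmul (c2 x) (cs y))) (qmul (c3 x) (c23 y))) (qmul (c23 x) (c3 y))) (qmul (c31 x) (c123 y))) (qmul (c12 x) (c1 y))) (qmul (c123 x) (c31 y)))
  (qsub (qsub (qadd (qsub (qadd (qadd (qsub (qmul (cs x) (c3 y)) (qmul (c1 x) (c31 y))) (qmul (c2 x) (c23 y))) (qmul (c3 x) (cs y))) (qmul (c23 x) (c2 y))) (qmul (c31 x) (c1 y))) (qmul (c12 x) (c123 y))) (qmul (c123 x) (c12 y)))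
  (qadd (qadd (qsub (qadd (qsub (qadd (qadd (qmul (cs x) (c23 y)) (qmul (c1 x) (c123 y))) (qmul (c2 x) (c3 y))) (qmul (c3 x) (c2 y))) (qmul (c23 x) (cs y))) (qmul (c31 x) (c12 y))) (qmul (c12 x) (c31 y))) (qmul (c123 x) (c1 y)))
  (qadd (qsub (qadd (qadd (qadd (qadd (qsub (qmul (cs x) (c31 y)) (qmul (c1 x) (c3 y))) (qmul (c2 x) (c123 y))) (qmul (c3 x) (c1 y))) (qmul (c23 x) (c12 y))) (qmul (c31 x) (cs y))) (qmul (c12 x) (c23 y))) (qmul (c123 x) (c2 y)))
  (qadd (qadd (qadd (qsub (qadd (qsub (qadd (qmul (cs x) (c12 y)) (qmul (c1 x) (c2 y))) (qmul (c2 x) (c1 y))) (qmul (c3 x) (c123 y))) (qmul (c23 x) (c31 y))) (qmul (c31 x) (c23 y))) (qmul (c12 x) (cs y))) (qmul (c123 x) (c3 y)))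
  (qadd (qadd (qadd (qadd (qadd (qadd (qadd (qmul (cs x) (c123 y)) (qmul (c1 x) (c23 y))) (qmul (c2 x) (c31 y))) (qmul (c3 x) (c12 y))) (qmul (c23 x) (c1 y))) (qmul (c31 x) (c2 y))) (qmul (c12 x) (c3 y))) (qmul (c123 x) (cs y))).

Definition qcl_rev (x : qcl) : qcl :=
  Cl (cs x) (c1 x) (c2 x) (c3 x) (qopp (c23 x)) (qopp (c31 x)) (qopp (c12 x)) (qopp (c123 x)).
Definition qvec (a b c : qt) : qcl := Cl q0 a b c q0 q0 q0 q0.
Definition qone : qcl := Cl q1 q0 q0 q0 q0 q0 q0 q0.
Definition qmone : qcl := Cl qm1 q0 q0 q0 q0 q0 q0 q0.
Definition qI : qcl := Cl q0 q0 q0 q0 q0 q0 q0 q1.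
Definition qa1 : qcl := qvec q0 q1 q0.
Definition qa2 : qcl := qvec (0, - 2^-1) (- 2^-1, 0) (2^-1, - 2^-1).
Definition qa3 : qcl := qvec q1 q0 q0.
Definition qaH3 (i : 'I_3) : qcl := tnth [tuple qa1; qa2; qa3] i.
Definition qword (w : seq ('I_3 * 'I_3)) : qcl :=
  foldr (fun p x => qcl_mul (qcl_mul (qaH3 p.1) (qaH3 p.2)) x) qone w.
Definition qip (x y : qcl) : qt :=
  qadd (qmul (cs (qcl_mul x (qcl_rev y))) qhalf) (qmul (cs (qcl_mul y (qcl_rev x))) qhalf).
Definition qcl_eqb (x y : qcl) : bool :=
  (cs x, c1 x, c2 x, c3 x, c23 x, c31 x, c12 x, c123 x) ==
  (cs y, c1 y, c2 y, c3 y, c23 y, c31 y, c12 y, c123 y).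

Section Ev.
Variable R : rcfType.

Lemma tau2 : tau R * tau R = tau R + 1.
Proof.
have h : Num.sqrt (5 : R) * Num.sqrt 5 = 5 by rewrite -expr2 sqr_sqrtr // ler0n.
rewrite /tau; set s := Num.sqrt _.
have e : (1+s)/2*((1+s)/2) - ((1+s)/2+1) = (s*s-5)/4 by field.
by apply/eqP; rewrite -subr_eq0 e h subrr mul0r.
Qed.


Lemma mul_tau (a b c d t : R) : t * t = t + 1 ->
  (a + b * t) * (c + d * t) = (a * c + b * d) + (a * d + b * c + b * d) * t.
Proof.
move=> h; have -> : (a + b * t) * (c + d * t) = a * c + (a * d + b * c) * t + b * d * (t * t) by ring.
rewrite h; ring.
Qed.

Definition ev (x : qt) : R := ratr x.1 + ratr x.2 * tau R.

Lemma ev_add x y : ev (qadd x y) = ev x + ev y.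
Proof. rewrite /ev /qadd /= !rmorphD /=; ring. Qed.
Lemma ev_opp x : ev (qopp x) = - ev x.
Proof. rewrite /ev /qopp /= !rmorphN /=; ring. Qed.
Lemma ev_sub x y : ev (qsub x y) = ev x - ev y.
Proof. by rewrite /qsub ev_add ev_opp. Qed.
Lemma ev_mul x y : ev (qmul x y) = ev x * ev y.
Proof.
rewrite /ev /qmul /= (mul_tau _ _ _ _ tau2) !rmorphD !rmorphM /=; ring.
Qed.

Definition ev_cl (x : qcl) : cl R :=
  Cl (ev (cs x)) (ev (c1 x)) (ev (c2 x)) (ev (c3 x))
     (ev (c23 x)) (ev (c31 x)) (ev (c12 x)) (ev (c123 x)).

Lemma ev_clmul x y : ev_cl (qcl_mul x y) = ev_cl x *c ev_cl y.
Proof.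
case: x => ????????; case: y => ????????.
by rewrite /ev_cl /qcl_mul /cl_mul /= !(ev_add, ev_sub, ev_opp, ev_mul).
Qed.

Lemma ev_clrev x : ev_cl (qcl_rev x) = cl_rev (ev_cl x).
Proof. by case: x => ????????; rewrite /ev_cl /= !ev_opp. Qed.

Lemma ev_q0 : ev q0 = 0. Proof. by rewrite /ev /= rmorph0 mul0r addr0. Qed.
Lemma ev_q1 : ev q1 = 1. Proof. by rewrite /ev /= rmorph0 rmorph1 mul0r addr0. Qed.
Lemma ev_q2 : ev q2 = 2. Proof. by rewrite /ev /= rmorph0 ratr_nat mul0r addr0. Qed.
Lemma ev_qm1 : ev qm1 = -1. Proof. by rewrite /ev /= rmorph0 rmorphN1 mul0r addr0. Qed.
Lemma ev_qmt : ev qmt = - tau R. Proof. by rewrite /ev /= rmorph0 rmorphN1 add0r mulN1r. Qed.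
Lemma ev_qhalf : ev qhalf = 2^-1.
Proof. by rewrite /ev /= rmorph0 fmorphV rmorph_nat mul0r addr0. Qed.

Lemma ev_a1 : ev_cl qa1 = a1 R.
Proof. by rewrite /ev_cl /a1 /cl_vec /= ev_q0 ev_q1. Qed.
Lemma ev_a3 : ev_cl qa3 = a3 R.
Proof. by rewrite /ev_cl /a3 /cl_vec /= ev_q0 ev_q1. Qed.
Lemma ev_a2 : ev_cl qa2 = a2 R.
Proof.
rewrite /ev_cl /a2 /cl_vec /= ev_q0 /ev /= !(rmorph0, rmorphN, fmorphV, ratr_nat).
by congr Cl; rewrite /tau; field.
Qed.
Lemma ev_I : ev_cl qI = cl_I R.
Proof. by rewrite /ev_cl /cl_I /= ev_q0 ev_q1. Qed.
Lemma ev_one : ev_cl qone = cl_one R.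
Proof. by rewrite /ev_cl /cl_one /= ev_q0 ev_q1. Qed.
Lemma ev_mone : ev_cl qmone = Cl (-1) 0 0 0 0 0 0 0.
Proof. by rewrite /ev_cl /= ev_q0 ev_qm1. Qed.
Lemma ev_aH3 i : ev_cl (qaH3 i) = aH3 R i.
Proof.
case: i => [[|[|[|//]]] ?]; rewrite /qaH3 /aH3 /tnth /=.
- exact: ev_a1.
- exact: ev_a2.
- exact: ev_a3.
Qed.

Lemma ev_ip x y : spinor_ip (ev_cl x) (ev_cl y) = ev (qip x y).
Proof.
by rewrite /qip /spinor_ip ev_add !ev_mul ev_qhalf -!ev_clrev -!ev_clmul.
Qed.

Lemma ev_eqb x y : qcl_eqb x y -> ev_cl x = ev_cl y.
Proof.
case: x => ????????; case: y => ????????.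
by rewrite /qcl_eqb /= => /eqP [] -> -> -> -> -> -> -> ->.
Qed.

End Ev.

Section Grp.
Variable R : rcfType.

Lemma cl_mulA (x y z : cl R) : x *c (y *c z) = x *c y *c z.
Proof.
case: x => ????????; case: y => ????????; case: z => ????????.
rewrite /cl_mul /=; congr Cl; ring.
Qed.

Lemma cl_mul1r (x : cl R) : cl_one R *c x = x.
Proof. case: x => ????????; rewrite /cl_mul /=; congr Cl; ring. Qed.

Lemma cl_mulr1 (x : cl R) : x *c cl_one R = x.
Proof. case: x => ????????; rewrite /cl_mul /=; congr Cl; ring. Qed.

Lemma cl_revM (x y : cl R) : cl_rev (x *c y) = cl_rev y *c cl_rev x.
Proof.
case: x => ????????; case: y => ????????.
rewrite /cl_mul /cl_rev /=; congr Cl; ring.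
Qed.

Lemma cl_oppE (x : cl R) : cl_opp x = Cl (-1) 0 0 0 0 0 0 0 *c x.
Proof. case: x => ????????; rewrite /cl_mul /cl_opp /=; congr Cl; ring. Qed.

Lemma cl_rev_aH3 i : cl_rev (aH3 R i) = aH3 R i.
Proof.
by case: i => [[|[|[|//]]] ?]; rewrite /aH3 /tnth /= /cl_rev /= oppr0.
Qed.

Lemma in2I_mul (x y : cl R) : in2I x -> in2I y -> in2I (x *c y).
Proof.
elim=> [|i j x' _ IH] hy; first by rewrite cl_mul1r.
by rewrite -cl_mulA; constructor; apply: IH.
Qed.

Lemma in2I_rev (x : cl R) : in2I x -> in2I (cl_rev x).
Proof.
elim=> [|i j x' _ IH].
  by rewrite /cl_rev /cl_one /= oppr0; constructor.
rewrite cl_revM cl_revM !cl_rev_aH3; apply: in2I_mul => //.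
rewrite -[aH3 R j *c aH3 R i]cl_mulr1; do 2 constructor.
Qed.

Lemma in2I_qword w : in2I (ev_cl R (qword w)).
Proof.
elim: w => [|[i j] w IH] /=; first by rewrite ev_one; constructor.
by rewrite !ev_clmul !ev_aH3; constructor.
Qed.

Lemma in2I_ev x w : qcl_eqb x (qword w) -> in2I (ev_cl R x).
Proof. by move/(ev_eqb R) ->; apply: in2I_qword. Qed.

Lemma in2I_mone : in2I (Cl (-1) 0 0 0 0 0 0 0 : cl R).
Proof.
rewrite -ev_mone; apply: (in2I_ev (w := [:: (0, 2); (0, 2)])).
by vm_compute.
Qed.

Lemma in2I_srefl (r x : cl R) : in2I r -> in2I x -> in2I (srefl r x).
Proof.
move=> hr hx; rewrite /srefl cl_oppE; apply: in2I_mul; first exact: in2I_mone.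
by apply: in2I_mul => //; apply: in2I_mul => //; apply: in2I_rev.
Qed.

End Grp.

Definition qfour (x0 x1 x2 x3 : qcl) (i : 'I_4) : qcl := tnth [tuple x0; x1; x2; x3] i.
Definition wfour (x0 x1 x2 x3 : seq ('I_3 * 'I_3)) (i : 'I_4) := tnth [tuple x0; x1; x2; x3] i.

Definition pat22 (T : Type) (d o z : T) (i j : 'I_4) : T :=
  (if i == j then d
   else if [|| (i == 0 :> nat) && (j == 1 :> nat), (i == 1 :> nat) && (j == 0 :> nat),
               (i == 2 :> nat) && (j == 3 :> nat) | (i == 3 :> nat) && (j == 2 :> nat)]
        then o else z).
Definition patA4 (T : Type) (d o z : T) (i j : 'I_4) : T :=
  (if i == j then d
   else if (i.+1 == j :> nat) || (j.+1 == i :> nat) then o else z).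

Lemma pat22_map T U (f : T -> U) d o z i j :
  f (pat22 d o z i j) = pat22 (f d) (f o) (f z) i j.
Proof. by rewrite /pat22; case: ifP => //; case: ifP. Qed.
Lemma patA4_map T U (f : T -> U) d o z i j :
  f (patA4 d o z i j) = patA4 (f d) (f o) (f z) i j.
Proof. by rewrite /patA4; case: ifP => //; case: ifP. Qed.

Definition L4 : seq 'I_4 :=
  [:: @Ordinal 4 0 isT; @Ordinal 4 1 isT; @Ordinal 4 2 isT; @Ordinal 4 3 isT].
Lemma L4P (i : 'I_4) : i \in L4.
Proof. by case: i => [[|[|[|[|//]]]] ?]. Qed.

Section Final.
Variable R : rcfType.

Lemma four_ev X0 X1 X2 X3 i :
  four (ev_cl R X0) (ev_cl R X1) (ev_cl R X2) (ev_cl R X3) i = ev_cl R (qfour X0 X1 X2 X3 i).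
Proof. by case: i => [[|[|[|[|//]]]] ?]. Qed.

Lemma simple_ok X0 X1 X2 X3 (C : 'M[R]_4) (qC : 'I_4 -> 'I_4 -> qt) w0 w1 w2 w3 :
  (forall i j, C i j = ev R (qC i j)) ->
  all (fun i => all (fun j => (qip (qfour X0 X1 X2 X3 i) (qfour X0 X1 X2 X3 i) == q1) &&
      (qmul q2 (qip (qfour X0 X1 X2 X3 i) (qfour X0 X1 X2 X3 j)) == qC i j)) L4) L4 ->
  all (fun i => qcl_eqb (qfour X0 X1 X2 X3 i) (qword (wfour w0 w1 w2 w3 i))) L4 ->
  simple_system_in_2I (four (ev_cl R X0) (ev_cl R X1) (ev_cl R X2) (ev_cl R X3)) C.
Proof.
move=> hC /allP hip /allP hw; split.
  exists 1%g; apply/matrixP => i j; rewrite !mxE !perm1 !four_ev !ev_ip hC.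
  move/allP: (hip i (L4P i)) => /(_ j (L4P j)) /andP [/eqP -> /eqP <-].
  by rewrite ev_q1 divr1 ev_mul ev_q2.
move=> x; elim=> [i|i x' _ IH]; first by rewrite four_ev; apply: in2I_ev (hw i (L4P i)).
apply: in2I_srefl => //; rewrite four_ev; exact: in2I_ev (hw i (L4P i)).
Qed.

Lemma cA2A2 i j : cartan_A2A2 R i j = ev R (pat22 q2 qm1 q0 i j).
Proof. by rewrite pat22_map ev_q2 ev_qm1 ev_q0 mxE. Qed.
Lemma cH2H2 i j : cartan_H2H2 R i j = ev R (pat22 q2 qmt q0 i j).
Proof. by rewrite pat22_map ev_q2 ev_qmt ev_q0 mxE. Qed.
Lemma cA4 i j : cartan_A4 R i j = ev R (patA4 q2 qm1 q0 i j).
Proof. by rewrite patA4_map ev_q2 ev_qm1 ev_q0 mxE. Qed.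

End Final.

Theorem mainTheorem5 (R : rcfType) :
  (* (i) type A2 + A2 *)
  simple_system_in_2I
    (four (a1 R *c a1 R) (a1 R *c a2 R) (a1 R *c cl_I R) (a2 R *c cl_I R))
    (cartan_A2A2 R) /\
  (* (ii) type H2 + H2 *)
  simple_system_in_2I
    (four (a1 R *c a1 R) (a2 R *c a3 R) (a2 R *c cl_I R) (a3 R *c cl_I R))
    (cartan_H2H2 R) /\
  (* (iii) type A4 *)
  simple_system_in_2I
    (four (a1 R *c a1 R) (a1 R *c a2 R)
       (a1 R *c a3 R *c a2 R *c a1 R *c a3 R *c a2 R *c a1 R *c a3 R)
       (a3 R *c a2 R *c a1 R *c a3 R *c a2 R *c a1 R *c a3 R *c a2 R
          *c a3 R *c a1 R *c a2 R *c a3 R))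
    (cartan_A4 R).
Proof.
split; [|split].
- rewrite -?ev_a1 -?ev_a2 -?ev_a3 -?ev_I -!ev_clmul.
  apply: (simple_ok (qC := pat22 q2 qm1 q0) (w0 := [::]) (w1 := [:: (0, 1)]) (w2 := [:: (2, 1); (0, 2); (1, 2); (0, 1); (0, 2); (1, 2); (0, 1)]) (w3 := [:: (0, 2); (1, 2); (0, 1); (0, 2); (1, 2); (0, 1); (0, 2)])).
  + exact: cA2A2.
  + by vm_compute.
  + by vm_compute.
- rewrite -?ev_a1 -?ev_a2 -?ev_a3 -?ev_I -!ev_clmul.
  apply: (simple_ok (qC := pat22 q2 qmt q0) (w0 := [::]) (w1 := [:: (1, 2)]) (w2 := [:: (0, 2); (1, 2); (0, 1); (0, 2); (1, 2); (0, 1); (0, 2)]) (w3 := [:: (0, 1); (2, 0); (1, 2); (0, 1); (0, 2); (1, 2); (0, 1)])).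
  + exact: cH2H2.
  + by vm_compute.
  + by vm_compute.
- rewrite -?ev_a1 -?ev_a2 -?ev_a3 -?ev_I -!ev_clmul.
  apply: (simple_ok (qC := patA4 q2 qm1 q0) (w0 := [::]) (w1 := [:: (0, 1)]) (w2 := [:: (2, 0); (1, 2); (0, 1); (0, 2)]) (w3 := [:: (2, 1); (0, 2); (1, 2); (0, 1); (0, 2); (1, 2)])).
  + exact: cA4.
  + by vm_compute.
  + by vm_compute.
Qed.
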